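(* Let $t$ be a positive integer with $3\nmid t$. Then for every positive integer $n$, $$b^{2}_{3,2t}(4n+3)\equiv 0 \pmod 4.$$
   Context: For integers $r\ge1$ write $f_r=\prod_{j\ge1}(1-q^{rj})$. For coprime positive integers $\ell,m$ and a positive integer $k$, $b^{k}_{\ell,m}(n)$ denotes the number of $k$-colored partitions of $n$ (each part receives one of $k$ colors) into parts not divisible by $\ell$ or by $m$; equivalently $\sum_{n\ge0} b^{k}_{\ell,m}(n)q^n=\dfrac{f_\ell^k f_m^k}{f_1^k f_{\ell m}^k}$. In particular $\sum_{n\ge0} b^{2}_{3,2t}(n)q^n=\dfrac{f_3^2f_{2t}^2}{f_1^2f_{6t}^2}$. *)

(* Defs.v *)
From mathcomp Require Import all_boot.
Set Implicit Arguments. Unset Strict Implicit. Unset Printing Implicit Defensive.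

(* A k-colored partition of n is a multiset of colored parts (j, c), with
   j >= 1 a part size and c : 'I_k a color, whose sizes sum to n.  We encode it
   by its multiplicity function f : (part size, color) -> multiplicity.
   Since every part is >= 1, part sizes and multiplicities are <= n, so the
   function lives in the finite type {ffun 'I_n.+1 * 'I_k -> 'I_n.+1}; the
   encoding is a bijection with multisets.
   b_col k l m n = number of k-colored partitions of n into parts divisible
   neither by l nor by m  (= b^k_{l,m}(n) of the paper). *)
Definition b_col (k l m n : nat) : nat :=
  #|[set f : {ffun 'I_n.+1 * 'I_k -> 'I_n.+1} |
      (\sum_(x : 'I_n.+1 * 'I_k) x.1 * f x == n) &&
      [forall x : 'I_n.+1 * 'I_k,
         (f x != ord0) ==> [&& 0 < x.1, ~~ (l %| x.1) & ~~ (m %| x.1)]]]|.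

(* Main.v *)
Require Import Defs.
From mathcomp Require Import all_boot all_order all_algebra.
From mathcomp Require Import ring zify.
Set Implicit Arguments. Unset Strict Implicit. Unset Printing Implicit Defensive.
Import Order.TTheory GRing.Theory Num.Theory.
Local Open Scope ring_scope.

Definition eqM (M : nat) (p q : {poly int}) := forall i, (i < M)%N -> p`_i = q`_i.
Definition evenp (p : {poly int}) := forall i, odd i -> p`_i = 0.
Definition supp4 (r : nat) (p : {poly int}) := forall i, (i %% 4 != r)%N -> p`_i = 0.

Lemma eqM_refl M p : eqM M p p. Proof. by []. Qed.
Lemma eqM_sym M p q : eqM M p q -> eqM M q p.
Proof. by move=> h i hi; rewrite h. Qed.
Lemma eqM_trans M p q r : eqM M p q -> eqM M q r -> eqM M p r.
Proof. by move=> h1 h2 i hi; rewrite h1 // h2. Qed.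
Lemma eqMD M p q p' q' : eqM M p p' -> eqM M q q' -> eqM M (p + q) (p' + q').
Proof. by move=> h1 h2 i hi; rewrite !coefD h1 // h2. Qed.
Lemma eqMB M p q p' q' : eqM M p p' -> eqM M q q' -> eqM M (p - q) (p' - q').
Proof. by move=> h1 h2 i hi; rewrite !coefB h1 // h2. Qed.
Lemma eqMM M p q p' q' : eqM M p p' -> eqM M q q' -> eqM M (p * q) (p' * q').
Proof.
move=> h1 h2 i hi; rewrite !coefM; apply: eq_bigr => j _.
rewrite h1 ?h2 //.
  by apply: leq_ltn_trans hi; apply: leq_subr.
by apply: leq_ltn_trans hi; rewrite -ltnS.
Qed.
Lemma eqM_prod M (I : Type) (r : seq I) (P : pred I) (F G : I -> {poly int}) :
  (forall i, P i -> eqM M (F i) (G i)) ->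
  eqM M (\prod_(i <- r | P i) F i) (\prod_(i <- r | P i) G i).
Proof.
move=> h; elim/big_rec2: _ => [|i x y Pi hxy]; first exact: eqM_refl.
exact: eqMM (h i Pi) hxy.
Qed.
Lemma eqM_sum M (I : Type) (r : seq I) (P : pred I) (F G : I -> {poly int}) :
  (forall i, P i -> eqM M (F i) (G i)) ->
  eqM M (\sum_(i <- r | P i) F i) (\sum_(i <- r | P i) G i).
Proof.
move=> h; elim/big_rec2: _ => [|i x y Pi hxy]; first exact: eqM_refl.
exact: eqMD (h i Pi) hxy.
Qed.
Lemma eqM_hi M s p : (M <= s)%N -> eqM M ('X^s * p) 0.
Proof.
move=> hs i hi; rewrite coefXnM coef0 ifT //.
by apply: leq_trans hs.
Qed.

Lemma evenpD p q : evenp p -> evenp q -> evenp (p + q).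
Proof. by move=> h1 h2 i hi; rewrite coefD h1 // h2 // addr0. Qed.
Lemma evenpM p q : evenp p -> evenp q -> evenp (p * q).
Proof.
move=> h1 h2 i hi; rewrite coefM big1 // => j _.
have [oj|ej] := boolP (odd j); first by rewrite h1 // mul0r.
rewrite h2 ?mulr0 //.
have hj : (j <= i)%N by rewrite -ltnS.
by rewrite oddB // hi (negbTE ej).
Qed.
Lemma evenp1 : evenp 1.
Proof. by move=> i hi; rewrite coefC; case: i hi. Qed.
Lemma evenp0 : evenp 0.
Proof. by move=> i hi; rewrite coef0. Qed.
Lemma evenpXn k : ~~ odd k -> evenp 'X^k.
Proof.
move=> hk i hi; rewrite coefXn; case: eqP => // e.
by move: hk; rewrite -e hi.
Qed.
Lemma evenp_prod (I : Type) (r : seq I) (P : pred I) (F : I -> {poly int}) :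
  (forall i, P i -> evenp (F i)) -> evenp (\prod_(i <- r | P i) F i).
Proof.
move=> h; elim/big_rec: _ => [|i x Pi hx]; first exact: evenp1.
exact: evenpM (h i Pi) hx.
Qed.
Lemma evenp_sum (I : Type) (r : seq I) (P : pred I) (F : I -> {poly int}) :
  (forall i, P i -> evenp (F i)) -> evenp (\sum_(i <- r | P i) F i).
Proof.
move=> h; elim/big_rec: _ => [|i x Pi hx]; first exact: evenp0.
exact: evenpD (h i Pi) hx.
Qed.

Lemma supp4M r s p q : supp4 r p -> supp4 s q -> supp4 ((r + s) %% 4) (p * q).
Proof.
move=> h1 h2 i hi; rewrite coefM big1 // => j _.
have [ej|nj] := eqVneq (j %% 4)%N r; last by rewrite h1 // mul0r.
rewrite h2 ?mulr0 //.
have hj : (j <= i)%N := ltn_ord j.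
move: hi ej hj; lia.
Qed.
Lemma supp4D r p q : supp4 r p -> supp4 r q -> supp4 r (p + q).
Proof. by move=> h1 h2 i hi; rewrite coefD h1 // h2 // addr0. Qed.
Lemma supp4_sum r (I : Type) (s : seq I) (P : pred I) (F : I -> {poly int}) :
  (forall i, P i -> supp4 r (F i)) -> supp4 r (\sum_(i <- s | P i) F i).
Proof.
move=> h; elim/big_rec: _ => [|i x Pi hx]; first by move=> i _; rewrite coef0.
exact: supp4D (h i Pi) hx.
Qed.
Lemma supp4Xn k : supp4 (k %% 4) 'X^k.
Proof. by move=> i hi; rewrite coefXn; case: eqP => // e; move: hi; rewrite e eqxx. Qed.
Lemma supp4_evenp r p : (r = 0 \/ r = 2)%N -> supp4 r p -> evenp p.
Proof.
move=> hr h i hi; apply: h; apply/negP => /eqP e.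
by move: hr hi e => [] ->; lia.
Qed.

Lemma sym_sum (f : nat -> int) h :
  (forall j, (j <= 2 * h)%N -> f j = f (2 * h - j)%N) ->
  \sum_(j < (2 * h).+1) f j = 2 * (\sum_(j < h) f j) + f h.
Proof.
move=> hf.
have e : ((2 * h).+1 = h + (1 + h))%N by lia.
rewrite e big_split_ord /= big_split_ord /= big_ord1 addn0.
have -> : \sum_(j < h) f (h + (1 + j))%N = \sum_(j < h) f j.
  rewrite [RHS](reindex_inj rev_ord_inj) /=.
  apply: eq_bigr => j _; rewrite hf; last by have := ltn_ord j; lia.
  congr f; have := ltn_ord j; lia.
ring.
Qed.

Lemma sqr_evenp_dvd W i : evenp W -> (i %% 4 = 2)%N -> (2 %| (W * W)`_i)%Z.
Proof.
move=> hW hi; rewrite coefM.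
have [h ih oh] : exists2 h, i = (2 * h)%N & odd h.
  by exists i./2; move: hi; lia.
subst i.
rewrite (@sym_sum (fun j => W`_j * W`_(2 * h - j)) h).
  rewrite (hW h oh) mul0r addr0.
  by apply/dvdzP; exists (\sum_(j < h) W`_j * W`_(2 * h - j)); rewrite mulrC.
move=> j hj /=; rewrite subKn // mulrC //.
Qed.

Lemma final_dvd T0 T1 W N : supp4 0 T0 -> supp4 1 T1 -> evenp W ->
  (N %% 4 = 3)%N -> (4 %| (((T0 + T1) * W) ^+ 2)`_N)%Z.
Proof.
move=> h0 h1 hW hN.
have -> : ((T0 + T1) * W) ^+ 2 =
  (T0 * W) * (T0 * W) + (T1 * T1) * (W * W) + ((T0 * T1) * (W * W)) *+ 2.
  by rewrite mulr2n; ring.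
have oN : odd N by move: hN; lia.
rewrite coefD coefMn coefD.
have e0 : evenp T0 by apply: supp4_evenp h0; left.
have e11 : evenp (T1 * T1).
  by apply: (@supp4_evenp 2); [right | exact: (supp4M h1 h1)].
rewrite (evenpM (evenpM e0 hW) (evenpM e0 hW)) // (evenpM e11 (evenpM hW hW)) //.
rewrite !add0r.
have h01 := supp4M h0 h1; rewrite /= in h01.
have : (2 %| ((T0 * T1) * (W * W))`_N)%Z.
  rewrite coefM; apply: rpred_sum => j _.
  have [ej|nj] := eqVneq (j %% 4)%N 1%N; last by rewrite h01 // mul0r.
  apply: dvdz_mull; apply: sqr_evenp_dvd => //.
  have := ltn_ord j; move: ej hN; lia.
case/dvdzP => k ->; apply/dvdzP; exists k.
by rewrite mulr2n; ring.
Qed.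

Lemma coef_comp_scale (R : comNzRingType) (p : {poly R}) (c : R) i :
  (p \Po (c%:P * 'X))`_i = c ^+ i * p`_i.
Proof.
elim/poly_ind: p i => [|p a IH] i; first by rewrite comp_poly0 !coef0 mulr0.
rewrite comp_poly_MXaddC !coefD !coefC mulrA coefMX coefMX.
case: i => [|i] /=; first by rewrite expr0 mul1r.
by rewrite coefMC IH exprS !addr0; ring.
Qed.

Definition Az (K : nat) : {poly {poly int}} :=
  \prod_(k < K) (1 + ('X^(6 * k + 1))%:P * 'X).
Definition Bz (K : nat) : {poly {poly int}} :=
  \prod_(k < K) ('X + ('X^(6 * k + 5))%:P).
Definition Gz (K : nat) : {poly {poly int}} :=
  \prod_(k < K) ((1 + ('X^(6 * k + 1))%:P * 'X) * ('X + ('X^(6 * k + 5))%:P)).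
Definition sc : {poly {poly int}} := ('X^6)%:P * 'X.

Lemma GzE K : Gz K = Az K * Bz K.
Proof. by rewrite /Gz big_split. Qed.

Lemma polyCX (k : nat) : (('X : {poly int})^+k)%:P = ('X%:P)^+k :> {poly {poly int}}.
Proof. by rewrite rmorphXn. Qed.

Lemma Az_comp K : (1 + ('X)%:P * 'X) * (Az K \Po sc) = Az K.+1.
Proof.
rewrite /Az big_ord_recl /= rmorph_prod /=; congr (_ * _).
apply: eq_bigr => k _; rewrite comp_polyD comp_polyM !comp_polyC comp_polyX /sc.
rewrite mulrA -polyCM -exprD; congr (1 + (_ ^+ _)%:P * _).
rewrite /bump /=; lia.
Qed.

Lemma Bz_comp K : (Bz K.+1 \Po sc) * ('X + ('X^(6 * K + 5))%:P) =
  ('X^(6 * K + 5))%:P * (1 + ('X)%:P * 'X) * Bz K.+1.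
Proof.
elim: K => [|K IH].
  rewrite /Bz big_ord1 /= comp_polyD comp_polyC comp_polyX /sc.
  rewrite !polyCX /=; ring.
rewrite /Bz big_ord_recr /= comp_polyM -/(Bz K.+1).
rewrite comp_polyD comp_polyC comp_polyX.
have -> : ('X^(6 * K.+1 + 5) : {poly int})%:P = ('X^6)%:P * ('X^(6 * K + 5))%:P.
  by rewrite -polyCM -exprD; congr (_ ^+ _)%:P; lia.
move: IH; rewrite /sc.
set c := (('X : {poly int})^+(6 * K + 5))%:P.
set Q6 := (('X : {poly int})^+6)%:P.
set Bs := Bz K.+1 \Po Q6 * 'X; set B := Bz K.+1 => IH.
have -> : Bs * (Q6 * 'X + Q6 * c) * ('X + Q6 * c)
   = (Bs * ('X + c)) * Q6 * ('X + Q6 * c) by ring.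
rewrite IH; ring.
Qed.

Lemma FE K : (Gz K.+1 \Po sc) * ('X + ('X^(6 * K + 5))%:P) =
  ('X^(6 * K + 5))%:P * (1 + ('X^(6 * K + 7))%:P * 'X) * Gz K.+1.
Proof.
rewrite !GzE comp_polyM -[(Az K.+1 \Po sc) * _ * _]mulrA Bz_comp.
have hA : Az K.+2 = Az K.+1 * (1 + ('X^(6 * K + 7))%:P * 'X).
  by rewrite /Az big_ord_recr /=; congr (_ * (1 + (_ ^+ _)%:P * _)); lia.
have -> : (Az K.+1 \Po sc) * (('X^(6 * K + 5))%:P * (1 + ('X)%:P * 'X) * Bz K.+1)
  = ('X^(6 * K + 5))%:P * ((1 + ('X)%:P * 'X) * (Az K.+1 \Po sc)) * Bz K.+1 by ring.
rewrite Az_comp hA; ring.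
Qed.

Section Coefs.
Variable K : nat.
Let g i := (Gz K.+1)`_i.

Lemma Erel i : 'X^(6 * i) * g i + 'X^(6 * i + 6) * 'X^(6 * K + 5) * g i.+1 =
   'X^(6 * K + 5) * g i.+1 + 'X^(6 * K + 5) * 'X^(6 * K + 7) * g i.
Proof.
have := congr1 (fun p : {poly {poly int}} => p`_i.+1) (FE K) => /=.
rewrite mulrDr coefD coefMX /= coefMC !coef_comp_scale.
have -> : ('X^(6 * K + 5))%:P * (1 + ('X^(6 * K + 7))%:P * 'X) * Gz K.+1
  = ('X^(6 * K + 5))%:P * Gz K.+1 + ('X^(6 * K + 5) * 'X^(6 * K + 7))%:P * (Gz K.+1 * 'X).
  by rewrite polyCM; ring.
rewrite coefD !coefCM coefMX /= -!exprM => E.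
rewrite /g (_ : (6 * i + 6 = 6 * i.+1)%N); last lia.
apply: (etrans _ (etrans E _)); ring.
Qed.

Lemma cancelXn n (a b : {poly int}) : 'X^n * a = 'X^n * b -> a = b.
Proof. by apply: mulfI; rewrite expf_eq0 polyX_eq0 andbF. Qed.


Lemma up_step M j : (M <= 6 * K + 7)%N ->
  eqM M (g (K.+1 + j).+1) ('X^(6 * j + 1) * g (K.+1 + j)).
Proof.
move=> hM.
have E := Erel (K.+1 + j).
have e1 : 'X^(6 * (K.+1 + j)) = 'X^(6 * K + 5) * 'X^(6 * j + 1) :> {poly int}.
  by rewrite -exprD; congr (_ ^+ _); lia.
rewrite e1 in E.
set A := (6 * (K.+1 + j) + 6)%N in E.
have E2 : g (K.+1 + j).+1 = 'X^(6 * j + 1) * g (K.+1 + j)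
   + 'X^A * g (K.+1 + j).+1 - 'X^(6 * K + 7) * g (K.+1 + j).
  apply: (@cancelXn (6 * K + 5)).
  apply: (@addIr _ ('X^(6 * K + 5) * 'X^(6 * K + 7) * g (K.+1 + j))).
  rewrite -E; ring.
move=> i hi; rewrite E2 !coefD coefN !coefXnM.
have h1 : (i < A)%N by rewrite /A; lia.
have h2 : (i < 6 * K + 7)%N by lia.
by rewrite h1 h2 addr0 subr0.
Qed.

Lemma down_step M j : (M <= 6 * K + 11)%N -> (j <= K)%N ->
  eqM M (g (K - j)) ('X^(6 * j + 5) * g (K - j).+1).
Proof.
move=> hM hj.
have E := Erel (K - j).
have e1 : 'X^(6 * K + 5) = 'X^(6 * (K - j)) * 'X^(6 * j + 5) :> {poly int}.
  by rewrite -exprD; congr (_ ^+ _); lia.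
have e2 : 'X^(6 * (K - j) + 6) * 'X^(6 * K + 5) = 'X^(6 * (K - j)) * 'X^(6 * K + 11) :> {poly int}.
  by rewrite -!exprD; congr (_ ^+ _); lia.
have e3 : 'X^(6 * K + 5) * 'X^(6 * K + 7) = 'X^(6 * (K - j)) * 'X^(6 * K + 6 * j + 12) :> {poly int}.
  by rewrite -!exprD; congr (_ ^+ _); lia.
rewrite e2 e3 e1 in E.
have E2 : g (K - j) = 'X^(6 * j + 5) * g (K - j).+1
   + 'X^(6 * K + 6 * j + 12) * g (K - j) - 'X^(6 * K + 11) * g (K - j).+1.
  apply: (@cancelXn (6 * (K - j))).
  apply: (@addIr _ ('X^(6 * (K - j)) * 'X^(6 * K + 11) * g (K - j).+1)).
  rewrite E; ring.
move=> i hi; rewrite E2 !coefD coefN !coefXnM.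
have h1 : (i < 6 * K + 6 * j + 12)%N by lia.
have h2 : (i < 6 * K + 11)%N by lia.
by rewrite h1 h2 addr0 subr0.
Qed.
End Coefs.

Fixpoint ep j := if j is j'.+1 then (ep j' + 6 * j' + 1)%N else 0%N.
Fixpoint en j := if j is j'.+1 then (en j' + 6 * j' + 5)%N else 0%N.

Section Chains.
Variables K M : nat.
Hypothesis hM : (M <= 6 * K + 7)%N.
Let g i := (Gz K.+1)`_i.

Lemma up_chain j : eqM M (g (K.+1 + j)) ('X^(ep j) * g K.+1).
Proof.
elim: j => [|j IH]; first by rewrite addn0 expr0 mul1r; exact: eqM_refl.
rewrite addnS; apply: eqM_trans (@up_step K M j hM) _.
apply: eqM_trans (eqMM (@eqM_refl M 'X^(6 * j + 1)) IH) _.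
rewrite mulrA -exprD.
have -> : (6 * j + 1 + ep j = ep j.+1)%N by rewrite /=; lia.
exact: eqM_refl.
Qed.

Lemma down_chain j : (j <= K.+1)%N -> eqM M (g (K.+1 - j)) ('X^(en j) * g K.+1).
Proof.
elim: j => [|j IH] hj; first by rewrite subn0 expr0 mul1r; exact: eqM_refl.
have hj' : (j <= K)%N by [].
have hM' : (M <= 6 * K + 11)%N by lia.
rewrite subSS; apply: eqM_trans (@down_step K M j hM' hj') _.
rewrite -subSn //.
apply: eqM_trans (eqMM (@eqM_refl M 'X^(6 * j + 5)) (IH (ltnW hj))) _.
rewrite mulrA -exprD.
have -> : (6 * j + 5 + en j = en j.+1)%N by rewrite /=; lia.
exact: eqM_refl.
Qed.

Definition Tpoly : {poly int} := \sum_(j < size (Gz K.+1)) 'X^(ep j) + \sum_(j < K.+1) 'X^(en j.+1).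

Lemma G1_eq : eqM M (Gz K.+1).[1] (Tpoly * g K.+1).
Proof.
rewrite (@horner_coef_wide _ (K.+1 + size (Gz K.+1))) ?leq_addl //.
under eq_bigr do rewrite expr1n mulr1.
rewrite big_split_ord /= /Tpoly mulrDl addrC !big_distrl /=.
apply: eqMD; first by apply: eqM_sum => j _; exact: up_chain.
rewrite (reindex_inj rev_ord_inj) /=.
apply: eqM_sum => j _; have := ltn_ord j; rewrite subSS => hj.
have := down_chain hj; rewrite subSS; exact.
Qed.
End Chains.

Lemma G1_prod K : (Gz K).[1] = \prod_(k < K) ((1 + 'X^(6 * k + 1)) * (1 + 'X^(6 * k + 5))).
Proof.
rewrite /Gz horner_prod; apply: eq_bigr => k _; rewrite !hornerE; ring.
Qed.

Definition mi : {poly int} := (-1)%:P * 'X.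
Definition mo : {poly {poly int}} := (-1)%:P * 'X.
Definition Phi (p : {poly {poly int}}) := map_poly (comp_poly mi) (p \Po mo).

Lemma fXn n : 'X^n \Po mi = (-1)^+n * 'X^n.
Proof. by rewrite rmorphXn /= comp_polyX /mi exprMn rmorphN1. Qed.

Lemma Phi_factor k :
  Phi ((1 + ('X^(6 * k + 1))%:P * 'X) * ('X + ('X^(6 * k + 5))%:P)) =
  - ((1 + ('X^(6 * k + 1))%:P * 'X) * ('X + ('X^(6 * k + 5))%:P)).
Proof.
rewrite /Phi !comp_polyM !comp_polyD comp_polyM !comp_polyC comp_polyX /mo rmorph1.
rewrite !rmorphM !rmorphD !rmorph1 /=.
rewrite !(rmorphM (map_poly (comp_poly mi))) /=.
rewrite !map_polyC map_polyX /= !fXn.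
have o1 : (-1 : {poly int}) ^+ (6 * k + 1) = -1.
  by rewrite -signr_odd oddD oddM /= expr1.
have o5 : (-1 : {poly int}) ^+ (6 * k + 5) = -1.
  by rewrite -signr_odd oddD oddM /= expr1.
have m1 : (-1 : {poly int}) \Po mi = -1 by rewrite rmorphN1.
rewrite o1 o5 m1 !mulN1r !polyCN polyC1; ring.
Qed.

Lemma Phi_G K : Phi (Gz K) = (-1)^+K * Gz K.
Proof.
rewrite /Phi /Gz rmorph_prod rmorph_prod /=.
rewrite (eq_bigr (fun k : 'I_K => - ((1 + ('X^(6 * k + 1))%:P * 'X) * ('X + ('X^(6 * k + 5))%:P)))).
  by rewrite prodrN card_ord.
by move=> k _; rewrite -Phi_factor.
Qed.

Lemma gK_even K : evenp ((Gz K)`_K).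
Proof.
have h := congr1 (fun p : {poly {poly int}} => p`_K) (Phi_G K); move: h => /=.
rewrite /Phi coef_map /= /mo coef_comp_scale.
have e : ((-1) ^+ K : {poly {poly int}}) = ((-1) ^+ K : {poly int})%:P.
  by rewrite rmorphXn rmorphN1.
rewrite e coefCM comp_polyM rmorphXn rmorphN1 => h.
have {h} h : (Gz K)`_K \Po mi = (Gz K)`_K.
  by move: h; move/(congr1 (fun x => (-1)^+K * x)); rewrite !signrMK.
move=> i oi; have := congr1 (fun p : {poly int} => p`_i) h => /=.
rewrite /mi coef_comp_scale -signr_odd oi expr1 => e2.
move: e2; rewrite mulN1r => e2.
have : (Gz K)`_K`_i *+ 2 = 0 by rewrite mulr2n -{1}e2 addNr.
by move/eqP; rewrite mulrn_eq0 /= => /eqP.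
Qed.

Lemma ep_mod j : (ep j %% 4 = if odd j then 1 else 0)%N.
Proof. elim: j => [|j IH] //=; move: IH; case oj: (odd j) => /= IH; lia. Qed.
Lemma en_mod j : (en j %% 4 = if odd j then 1 else 0)%N.
Proof. elim: j => [|j IH] //=; move: IH; case oj: (odd j) => /= IH; lia. Qed.

Lemma Tsplit K : exists T0 T1, Tpoly K = T0 + T1 /\ supp4 0 T0 /\ supp4 1 T1.
Proof.
exists (\sum_(j < size (Gz K.+1) | ~~ odd j) 'X^(ep j) + \sum_(j < K.+1 | ~~ odd j.+1) 'X^(en j.+1)).
exists (\sum_(j < size (Gz K.+1) | odd j) 'X^(ep j) + \sum_(j < K.+1 | odd j.+1) 'X^(en j.+1)).
split.
  rewrite /Tpoly (bigID (fun j : 'I__ => odd j)) [X in _ + X](bigID (fun j : 'I__ => odd j.+1)) /=.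
  ring.
split.
  apply: supp4D; apply: supp4_sum => j hj.
    by have := @supp4Xn (ep j); rewrite ep_mod (negbTE hj).
  by have := @supp4Xn (en j.+1); rewrite en_mod (negbTE hj).
apply: supp4D; apply: supp4_sum => j hj.
  by have := @supp4Xn (ep j); rewrite ep_mod hj.
by have := @supp4Xn (en j.+1); rewrite en_mod hj.
Qed.

Definition c6 (a : nat) := (a %% 6 == 1)%N || (a %% 6 == 5)%N.

Lemma blocks (F : nat -> {poly int}) K :
  \prod_(a < 6 * K | c6 a) F a = \prod_(k < K) (F (6 * k + 1)%N * F (6 * k + 5)%N).
Proof.
elim: K => [|K IH]; first by rewrite !big_ord0.
rewrite (_ : (6 * K.+1 = 6 * K + 6)%N); last lia.
rewrite big_split_ord /= IH big_ord_recr /=; congr (_ * _).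
rewrite (eq_bigl (fun i : 'I_6 => (i == 1 :> nat) || (i == 5 :> nat))); last first.
  move=> i /=; rewrite /c6; have hi := ltn_ord i.
  by have -> : ((6 * K + i) %% 6 = i)%N by lia.
rewrite big_mkcond /= !big_ord_recl big_ord0 /=.
by rewrite !mul1r !mulr1.
Qed.

Definition okt (t a : nat) := [&& (0 < a)%N, ~~ (3 %| a)%N & ~~ (2 * t %| a)%N].
Definition Gs (N a : nat) : {poly int} := \sum_(j < N.+1) 'X^(a * j).
Definition Pp (t N : nat) : {poly int} := \prod_(a < N.+1) (if okt t a then Gs N a else 1).
Definition D1 (N : nat) : {poly int} := \prod_(a < N.+1 | c6 a) (1 + 'X^a).

Lemma L1 a m : (1 + 'X^a) * \sum_(j < m) 'X^(2 * a * j) = \sum_(j < 2 * m) 'X^(a * j) :> {poly int}.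
Proof.
elim: m => [|m IH]; first by rewrite !big_ord0 mulr0.
rewrite (_ : (2 * m.+1 = (2 * m).+2)%N); last lia.
rewrite big_ord_recr /= !big_ord_recr /= -IH.
rewrite (_ : (a * (2 * m).+1 = a + 2 * a * m)%N); last lia.
rewrite (_ : (a * (2 * m) = 2 * a * m)%N); last lia.
rewrite exprD; ring.
Qed.

Lemma L2 a m : (\sum_(j < m) 'X^(a * j)) * (1 + 'X^(a * m)) = \sum_(j < 2 * m) 'X^(a * j) :> {poly int}.
Proof.
rewrite (_ : (2 * m = m + m)%N); last lia.
rewrite big_split_ord /= mulrDr mulr1 big_distrl /=; congr (_ + _).
by apply: eq_bigr => j _; rewrite -exprD; congr (_ ^+ _); lia.
Qed.

Lemma ok_odd t a : odd a -> (okt t a) = c6 a.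
Proof.
move=> oa; rewrite /okt /c6.
have -> : ~~ (2 * t %| a)%N.
  apply/negP => /(dvdn_trans (dvdn_mulr t (dvdnn 2))).
  by rewrite dvdn2 oa.
by rewrite andbT; move: oa; lia.
Qed.

Lemma c6_odd a : c6 a -> odd a.
Proof. by rewrite /c6; lia. Qed.

Lemma eqM_one M (p : {poly int}) k : (M <= k)%N -> eqM M (1 + 'X^k * p) 1.
Proof.
move=> hk; have := eqM_hi p hk => h i hi.
by rewrite coefD h // coef0 addr0.
Qed.

Lemma reduce t N : exists E, evenp E /\ eqM N.+1 (Pp t N) (D1 N * E).
Proof.
set Z := \prod_(a < N.+1) (if okt t a then 1 + 'X^(a * N.+1) else 1) : {poly int}.
have hZ : eqM N.+1 Z 1.
  have -> : (1 : {poly int}) = \prod_(a < N.+1) (1 : {poly int}) by rewrite big1.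
  apply: eqM_prod => a _; case: ifP => [ok|_]; last exact: eqM_refl.
  have := eqM_one 1 (_ : (N.+1 <= a * N.+1)%N); rewrite mulr1; apply.
  by move: ok; rewrite /okt => /andP [a0 _]; rewrite leq_pmull.
pose H a : {poly int} := \sum_(j < N.+1) 'X^(2 * a * j).
have hPZ : Pp t N * Z = \prod_(a < N.+1) (if okt t a then (1 + 'X^a) * H a else 1).
  rewrite /Pp /Z -big_split /=; apply: eq_bigr => a _.
  case: ifP => _; last by rewrite mulr1.
  by rewrite /Gs L2 /H L1.
exists ((\prod_(a < N.+1) (if okt t a && ~~ odd a then 1 + 'X^a else 1)) *
        \prod_(a < N.+1) (if okt t a then H a else 1)).
split.
  apply: evenpM; apply: evenp_prod => a _; case: ifP => h; try exact: evenp1.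
    case/andP: h => _ ea; apply: evenpD; first exact: evenp1.
    exact: evenpXn.
  apply: evenp_sum => j _; apply: evenpXn.
  by rewrite -mulnA oddM.
have h1 : eqM N.+1 (Pp t N) (Pp t N * Z).
  by rewrite -[X in eqM _ X _]mulr1; apply: eqMM; [exact: eqM_refl | exact: eqM_sym].
apply: (eqM_trans h1).
rewrite hPZ mulrA.
suff -> : \prod_(a < N.+1) (if okt t a then (1 + 'X^a) * H a else 1) =
  D1 N * (\prod_(a < N.+1) (if okt t a && ~~ odd a then 1 + 'X^a else 1)) *
        \prod_(a < N.+1) (if okt t a then H a else 1) by exact: eqM_refl.
rewrite /D1 [in RHS]big_mkcond -!big_split; apply: eq_bigr => a _ /=.
case oa: (odd a).
  rewrite andbF mulr1 ok_odd //; case: ifP => _; by rewrite ?mul1r.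
have -> : c6 a = false by apply/negP => /c6_odd; rewrite oa.
rewrite andbT mul1r; case: ifP => _; by rewrite ?mulr1.
Qed.

Lemma D1_G N : eqM N.+1 (D1 N) ((Gz N.+1).[1]).
Proof.
rewrite G1_prod -(blocks (fun a => 1 + 'X^a)).
rewrite (_ : (6 * N.+1 = N.+1 + 5 * N.+1)%N); last lia.
rewrite big_split_ord /= -[X in eqM _ X _]mulr1 /D1.
apply: eqMM; first exact: eqM_refl.
apply: eqM_sym.
apply: (@eqM_trans _ _ (\prod_(i < 5 * N.+1 | c6 (N.+1 + i)) (1 : {poly int}))).
  apply: eqM_prod => i _; rewrite -[X in 1 + X]mulr1; apply: eqM_one.
  exact: leq_addr.
by rewrite big1 //; exact: eqM_refl.
Qed.

Lemma bridge t N : ((b_col 2 3 (2 * t) N)%:Z) = ((Pp t N) ^+ 2)`_N.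
Proof.
pose F (x : 'I_N.+1 * 'I_2) (j : 'I_N.+1) : {poly int} :=
  if (j != ord0) ==> okt t x.1 then 'X^(x.1 * j) else 0.
have h1 : Pp t N ^+ 2 = \prod_(x : 'I_N.+1 * 'I_2) \sum_(j : 'I_N.+1) F x j.
  rewrite (eq_bigr (fun x : 'I_N.+1 * 'I_2 => if okt t x.1 then Gs N x.1 else 1)); last first.
    move=> x _; case: ifP => ok.
      by apply: eq_bigr => j _; rewrite /F ok implybT.
    rewrite (eq_bigr (fun j : 'I_N.+1 => if j == ord0 then 'X^(x.1 * j) else 0)); last first.
      by move=> j _; rewrite /F ok implybF negbK.
    by rewrite -big_mkcond big_pred1_eq muln0 expr0.
  rewrite -(pair_big xpredT xpredT (fun (a : 'I_N.+1) (c : 'I_2) => if okt t a then Gs N a else 1)) /=.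
  rewrite expr2 /Pp -big_split /=; apply: eq_bigr => a _.
  by rewrite big_ord_recr big_ord1.
rewrite h1 bigA_distr_bigA /= coef_sum.
rewrite (eq_bigr (fun f : {ffun 'I_N.+1 * 'I_2 -> 'I_N.+1} =>
   (([forall x, (f x != ord0) ==> okt t x.1] && (N == \sum_(x : 'I_N.+1 * 'I_2) x.1 * f x)%N) : nat)%:R)); last first.
  move=> f _; case: (boolP [forall x, (f x != ord0) ==> okt t x.1]) => H.
    rewrite (eq_bigr (fun x : 'I_N.+1 * 'I_2 => 'X^(x.1 * f x))); last first.
      by move=> x _; rewrite /F (forallP H x).
    by rewrite prodrXr coefXn.
  move: H; rewrite negb_forall => /existsP [x Hx].
  by rewrite (bigD1 x) //= {1}/F (negbTE Hx) mul0r coef0.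
rewrite -natr_sum natz; congr Posz.
rewrite /b_col cardsE -sum1_card big_mkcond /=; apply: eq_bigr => f _.
rewrite unfold_in /okt /= andbC eq_sym; by case: (_ && _).
Qed.

Local Close Scope ring_scope.

Theorem mainTheorem2 (t n : nat) :
  0 < t -> ~~ (3 %| t) -> 0 < n ->
  b_col 2 3 (2 * t) (4 * n + 3) %% 4 = 0.
Proof.
move=> _ _ _; set N := 4 * n + 3.
apply/eqP.
have h : (4 %| (b_col 2 3 (2 * t) N)%:Z)%Z; last exact: h.
rewrite bridge.
have [E [hE hPE]] := @reduce t N.
have hD := @D1_G N.
have hM : N.+1 <= 6 * N + 7 by lia.
have hG := @G1_eq N N.+1 hM.
have [T0 [T1 [hT [h0 h1]]]] := @Tsplit N.
have hW : evenp ((Gz N.+1)`_N.+1 * E) by apply: evenpM; [exact: gK_even | exact: hE].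
have hP : eqM N.+1 (Pp t N) ((T0 + T1) * ((Gz N.+1)`_N.+1 * E)).
  apply: (eqM_trans hPE).
  apply: (eqM_trans (eqMM hD (eqM_refl E))).
  apply: (eqM_trans (eqMM hG (eqM_refl E))).
  rewrite hT GRing.mulrA; exact: eqM_refl.
have -> : ((Pp t N ^+ 2)`_N = (((T0 + T1) * ((Gz N.+1)`_N.+1 * E)) ^+ 2)`_N)%R.
  by rewrite !GRing.expr2; apply: (eqMM hP hP).
apply: final_dvd => //.
rewrite /N; lia.
Qed.
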